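(* Under the coupled PIMH scheme described in the context, for any $n\ge1$ and $s\ge0$, $p_N^{(n)}\ge\tilde p_N^{(n-1)}\implies p_N^{(n+s)}\ge\tilde p_N^{(n+s-1)}$ almost surely. (That is, the sequence $(p_N^{(n+1)})_{n\ge0}$ stochastically dominates $(\tilde p_N^{(n)})_{n\ge0}$ in this sense.)
   Context: A particle filter (PF) call $(X_{1:T},p_N)\sim\mathrm{PF}$ returns a random path $X_{1:T}$ and a strictly positive random likelihood estimate $p_N$. Coupled PIMH: sample $(X^{(0)},p_N^{(0)})\sim\mathrm{PF}$. At iteration $n\ge1$ draw a fresh independent $(X^*,p_N^* )\sim\mathrm{PF}$ and a single $\mathfrak u\sim\mathcal U[0,1]$ shared by both chains. First chain: if $\mathfrak u\le 1\wedge p_N^*/p_N^{(n-1)}$ set $(X^{(n)},p_N^{(n)})=(X^*,p_N^* )$, else $(X^{(n)},p_N^{(n)})=(X^{(n-1)},p_N^{(n-1)})$. Second chain: at $n=1$ set $(\tilde X^{(0)},\tilde p_N^{(0)})=(X^*,p_N^* )$; for $n\ge2$, if $\mathfrak u\le 1\wedge p_N^*/\tilde p_N^{(n-2)}$ set $(\tilde X^{(n-1)},\tilde p_N^{(n-1)})=(X^*,p_N^* )$, else $(\tilde X^{(n-1)},\tilde p_N^{(n-1)})=(\tilde X^{(n-2)},\tilde p_N^{(n-2)})$. *)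

(* Defs.v *)
(* The coupled PIMH scheme as a deterministic function of the
   sampled randomness: PF outputs (xs n, ps n) and shared uniforms us n. *)
From mathcomp Require Import all_boot all_order all_algebra.
Set Implicit Arguments. Unset Strict Implicit. Unset Printing Implicit Defensive.
Import Order.TTheory GRing.Theory Num.Theory.
Local Open Scope ring_scope.

Section CoupledPIMH.
Variables (R : realFieldType) (X : Type).
(* xs 0, ps 0 : the initial PF draw (X^(0), p_N^(0));
   xs n, ps n (n >= 1) : the fresh PF draw (X^*, p_N^* ) at iteration n;
   us n (n >= 1) : the uniform shared by both chains at iteration n. *)
Variables (xs : nat -> X) (ps : nat -> R) (us : nat -> R).

Fixpoint pimh1 (n : nat) : X * R :=
  match n with
  | 0 => (xs 0, ps 0)
  | m.+1 => let prev := pimh1 m in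
            if us m.+1 <= Num.min 1 (ps m.+1 / prev.2)
            then (xs m.+1, ps m.+1) else prev
  end.

(* Second chain: pimh2 k = (tilde X^(k), tilde p_N^(k)), updated at iteration
   n = k+1 (k >= 1) with the same proposal and uniform as the first chain. *)
Fixpoint pimh2 (k : nat) : X * R :=
  match k with
  | 0 => (xs 1, ps 1)
  | m.+1 => let prev := pimh2 m in
            if us m.+2 <= Num.min 1 (ps m.+2 / prev.2)
            then (xs m.+2, ps m.+2) else prev
  end.
End CoupledPIMH.

(* Main.v *)
Require Import Defs.
From mathcomp Require Import all_boot all_order all_algebra.
Import Order.TTheory GRing.Theory Num.Theory.
Local Open Scope ring_scope.

Lemma step_le (R : realFieldType) (a b p u : R) :
  0 < a -> 0 < b -> 0 < p -> u <= 1 -> b <= a ->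
  (u <= Num.min 1 (p / a) -> u <= Num.min 1 (p / b)) /\
  (~~ (u <= Num.min 1 (p / a)) -> p <= a).
Proof.
move=> ha hb hp hu hba; split.
  move=> h; rewrite le_min in h; rewrite le_min; case/andP: h => h1 h2; rewrite h1 /=.
  apply: (le_trans h2).
  by rewrite ler_pM2l // lef_pV2 // posrE.
rewrite le_min hu /= -ltNge => h.
have : p / a < 1 by apply: lt_le_trans hu.
by rewrite ltr_pdivrMr // mul1r => /ltW.
Qed.

Lemma pos1 (R : realFieldType) (X : Type) xs (ps us : nat -> R)
  (hps : forall n, 0 < ps n) k : 0 < (@pimh1 R X xs ps us k).2.
Proof. elim: k => [|k IH] /=; first exact: hps. by case: ifP => _ //; exact: hps. Qed.

Lemma pos2 (R : realFieldType) (X : Type) xs (ps us : nat -> R)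
  (hps : forall n, 0 < ps n) k : 0 < (@pimh2 R X xs ps us k).2.
Proof. elim: k => [|k IH] /=; first exact: hps. by case: ifP => _ //; exact: hps. Qed.

Lemma pimh1S (R : realFieldType) (X : Type) xs (ps us : nat -> R) m :
  @pimh1 R X xs ps us m.+1 =
  if us m.+1 <= Num.min 1 (ps m.+1 / (pimh1 xs ps us m).2)
  then (xs m.+1, ps m.+1) else pimh1 xs ps us m.
Proof. by []. Qed.

Lemma pimh2S (R : realFieldType) (X : Type) xs (ps us : nat -> R) m :
  @pimh2 R X xs ps us m.+1 =
  if us m.+2 <= Num.min 1 (ps m.+2 / (pimh2 xs ps us m).2)
  then (xs m.+2, ps m.+2) else pimh2 xs ps us m.
Proof. by []. Qed.

Theorem proposition5 (R : realFieldType) (X : Type)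
    (xs : nat -> X) (ps : nat -> R) (us : nat -> R)
    (hps : forall n, 0 < ps n)
    (hus : forall n, 0 <= us n <= 1)
    (n s : nat) (hn : (1 <= n)%N) :
  (pimh2 xs ps us n.-1).2 <= (pimh1 xs ps us n).2 ->
  (pimh2 xs ps us (n + s).-1).2 <= (pimh1 xs ps us (n + s)%N).2.
Proof.
move=> H0; elim: s => [|s IH]; first by rewrite addn0.
have -> : (n + s.+1)%N = (n + s).+1 by rewrite addnS.
case E: (n + s)%N => [|k]; first by move/eqP: E; rewrite addn_eq0 => /andP[/eqP n0 _]; rewrite n0 in hn.
rewrite E [k.+1.-1]/= in IH; rewrite [k.+2.-1]/= pimh1S pimh2S.
have ha := @pos1 R X xs ps us hps k.+1.
have hb := @pos2 R X xs ps us hps k.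
move: IH.
set a := (pimh1 xs ps us k.+1).2.
set b := (pimh2 xs ps us k).2.
move=> hba.
have /andP[_ hu] := hus k.+2.
have [H1 H2] := @step_le R _ _ _ _ ha hb (hps k.+2) hu hba.
case: ifP => h2; case: ifP => h1 //=.
- by apply: H2; rewrite h1.
- by rewrite (H1 h1) in h2.
Qed.
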